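(* A graph $G$ is non-ambiguous if and only if it is covering-minimal.
   Context: Graphs are finite, simple, undirected, connected; $B_G(v)$ denotes the ball of radius $1$ around $v$ (vertices $N_G(v)\cup\{v\}$ and the edges from $v$). A labelling $\lambda$ of the vertices of $G$ is locally bijective if (1) for each $v$ and all $v',v''\in B_G(v)$, $\lambda(v')=\lambda(v'')$ iff $v'=v''$, and (2) for all $v',v''$ with $\lambda(v')=\lambda(v'')$, the labelled balls $(B_G(v'),\lambda)$ and $(B_G(v''),\lambda)$ are isomorphic. $G$ is ambiguous if it has a locally bijective labelling that is not bijective, and non-ambiguous otherwise. $G$ is a covering of $H$ via $\gamma$ if $\gamma$ is a surjective homomorphism whose restriction to each $B_G(v)$ is a bijection onto $B_H(\gamma(v))$; $G$ is covering-minimal if every covering from $G$ to some graph $H$ is a bijection. *)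

(* Defs.v *)
From mathcomp Require Import all_boot.
Set Implicit Arguments. Unset Strict Implicit. Unset Printing Implicit Defensive.

Definition simple_graph (T : finType) (e : rel T) : Prop :=
  symmetric e /\ irreflexive e.

Definition connected_graph (T : finType) (e : rel T) : Prop :=
  forall x y : T, connect e x y.

Definition is_graph (T : finType) (e : rel T) : Prop :=
  simple_graph e /\ connected_graph e.

Definition ball (T : finType) (e : rel T) (v : T) : {set T} :=
  [set u | (u == v) || e v u].

(* edge relation of the ball B_G(v): only the edges incident to v *)
Definition ball_edge (T : finType) (e : rel T) (v : T) (x y : T) : bool :=
  [&& x \in ball e v, y \in ball e v &
      ((x == v) && e v y) || ((y == v) && e x v)].

Definition labelled_ball_iso (T : finType) (e : rel T) (L : Type)
    (lam : T -> L) (v1 v2 : T) : Prop :=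
  exists f : T -> T,
    [/\ {in ball e v1 &, injective f},
        f @: ball e v1 = ball e v2,
        {in ball e v1, forall x, lam (f x) = lam x} &
        {in ball e v1 &, forall x y, ball_edge e v1 x y = ball_edge e v2 (f x) (f y)}].

Definition locally_bijective (T : finType) (e : rel T) (lam : T -> nat) : Prop :=
  (forall v, {in ball e v &, forall x y, lam x = lam y <-> x = y}) /\
  (forall v1 v2, lam v1 = lam v2 -> labelled_ball_iso e lam v1 v2).

Definition ambiguous (T : finType) (e : rel T) : Prop :=
  exists lam : T -> nat, locally_bijective e lam /\ ~ injective lam.

Definition non_ambiguous (T : finType) (e : rel T) : Prop := ~ ambiguous e.

Definition covering (T T' : finType) (e : rel T) (e' : rel T') (gamma : T -> T') : Prop :=
  [/\ forall y : T', exists x : T, gamma x = y,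
      forall x y : T, e x y -> e' (gamma x) (gamma y) &
      forall v : T, {in ball e v &, injective gamma} /\
                    gamma @: ball e v = ball e' (gamma v)].

Definition covering_minimal (T : finType) (e : rel T) : Prop :=
  forall (T' : finType) (e' : rel T') (gamma : T -> T'),
    is_graph e' -> covering e e' gamma -> bijective gamma.

(* Main.v *)
Require Import Defs.
From mathcomp Require Import all_boot.
Set Implicit Arguments. Unset Strict Implicit. Unset Printing Implicit Defensive.

Section BallFacts.
Variables (T : finType) (e : rel T).
Hypothesis (se : symmetric e) (ie : irreflexive e).

Lemma ball_center v : v \in ball e v.
Proof. by rewrite inE eqxx. Qed.

Lemma ball_edgeE v x y : x \in ball e v -> y \in ball e v ->
  ball_edge e v x y = ((x == v) && (y != v)) || ((y == v) && (x != v)).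
Proof.
move=> xin yin; rewrite /ball_edge xin yin /=.
have ey : e v y = (y != v).
  move: yin; rewrite inE; case: eqVneq => [->|] /=; first by rewrite ie.
  by move=> _ ->.
have ex : e x v = (x != v).
  move: xin; rewrite inE se; case: eqVneq => [->|] /=; first by rewrite ie.
  by move=> _ ->.
by rewrite ey ex.
Qed.
End BallFacts.

Section Dir1.
Variables (T T' : finType) (e : rel T) (e' : rel T') (gamma : T -> T').
Hypothesis ge : is_graph e.
Hypothesis cov : covering e e' gamma.

Definition lam1 (x : T) : nat := nat_of_ord (enum_rank (gamma x)).

Lemma lam1E x y : lam1 x = lam1 y <-> gamma x = gamma y.
Proof. rewrite /lam1; split => [/val_inj/enum_rank_inj //|->//]. Qed.

Lemma cov_inj v : {in ball e v &, injective gamma}.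
Proof. by case: cov => _ _ /(_ v) []. Qed.

Lemma cov_img v : gamma @: ball e v = ball e' (gamma v).
Proof. by case: cov => _ _ /(_ v) []. Qed.

Lemma lam1_lb : locally_bijective e lam1.
Proof.
have [[se ie] _] := ge.
split.
  move=> v x y xin yin; split; last by move->.
  by move/lam1E; apply: (cov_inj xin yin).
move=> v1 v2 /lam1E g12.
pose f x := odflt x [pick y in ball e v2 | gamma y == gamma x].
have fP x : x \in ball e v1 -> f x \in ball e v2 /\ gamma (f x) = gamma x.
  move=> xin; rewrite /f; case: pickP => [y /andP [yin /eqP gy] //|H].
  have : gamma x \in gamma @: ball e v2 by rewrite cov_img -g12 -cov_img imset_f.
  by case/imsetP => y yin gy; have := H y; rewrite yin gy eqxx.
have finj : {in ball e v1 &, injective f}.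
  move=> x y xin yin fxy; apply: (cov_inj xin yin).
  by rewrite -(fP _ xin).2 -(fP _ yin).2 fxy.
have fv1 : f v1 = v2.
  have [h1 h2] := fP _ (ball_center e v1).
  by apply: (cov_inj h1 (ball_center e v2)); rewrite h2.
exists f; split => //.
- apply/setP => y; apply/imsetP/idP => [[x xin ->]|yin]; first by case: (fP _ xin).
  have : gamma y \in gamma @: ball e v1 by rewrite cov_img g12 -cov_img imset_f.
  case/imsetP => x xin gx; exists x => //.
  have [h1 h2] := fP _ xin; apply: (cov_inj yin h1); by rewrite h2.
- by move=> x xin; apply/lam1E; case: (fP _ xin).
- move=> x y xin yin.
  have [fx _] := fP _ xin; have [fy _] := fP _ yin.
  have eqv z : z \in ball e v1 -> (f z == v2) = (z == v1).
    move=> zin; apply/eqP/eqP => [h|->//]; apply: finj => //.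
      exact: ball_center.
    by rewrite h fv1.
  by rewrite (ball_edgeE se ie xin yin) (ball_edgeE se ie fx fy) !eqv.
Qed.
End Dir1.

Section Dir2.
Variables (T : finType) (e : rel T) (lam : T -> nat).
Hypothesis ge : is_graph e.
Hypothesis lb : locally_bijective e lam.

Definition rr x := odflt x [pick y | lam y == lam x].

Lemma lam_rr x : lam (rr x) = lam x.
Proof. by rewrite /rr; case: pickP => [y /eqP|]. Qed.

Lemma rr_eq x y : lam x = lam y -> rr x = rr y.
Proof.
move=> h; rewrite /rr h; case: pickP => [z|H] //=.
by have := H y; rewrite eqxx.
Qed.

Lemma rr_idem x : rr (rr x) == rr x.
Proof. by apply/eqP; apply: rr_eq; apply: lam_rr. Qed.

Definition TT := {x : T | rr x == x}.
Definition gam (x : T) : TT := exist _ (rr x) (rr_idem x).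

Lemma gamE x y : gam x = gam y <-> lam x = lam y.
Proof.
split => [/(congr1 val) /= h|h]; last by apply: val_inj; apply: rr_eq.
by rewrite -lam_rr h lam_rr.
Qed.

Lemma gam_val (a : TT) : gam (val a) = a.
Proof. by apply: val_inj => /=; apply/eqP; apply: (valP a). Qed.

Definition ee (a b : TT) : bool :=
  [exists x, [exists y, [&& e x y, gam x == a & gam y == b]]].

Lemma eeP a b : reflect (exists x y, [/\ e x y, gam x = a & gam y = b]) (ee a b).
Proof.
apply: (iffP existsP) => [[x /existsP [y /and3P [h1 /eqP h2 /eqP h3]]]|[x [y [h1 h2 h3]]]].
  by exists x, y.
by exists x; apply/existsP; exists y; rewrite h1 h2 h3 !eqxx.
Qed.

Lemma ee_graph : is_graph ee.
Proof.
have [[se ie] ce] := ge.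
split; first split.
- move=> a b; apply/eeP/eeP => [[x [y [h1 h2 h3]]]|[x [y [h1 h2 h3]]]];
    by exists y, x; rewrite se.
- move=> a; apply/negbTE/negP => /eeP [x [y [h1 h2 h3]]].
  have : lam x = lam y by apply/gamE; rewrite h2 h3.
  have yin : y \in ball e x by rewrite inE h1 orbT.
  move/(lb.1 x x y (ball_center e x) yin) => h.
  by move: h1; rewrite h ie.
- move=> a b; rewrite -(gam_val a) -(gam_val b).
  have := ce (val a) (val b); move: (val a) (val b) => x y.
  case/connectP => p pth ->; elim: p x pth => [|z p IH] x /=; first by rewrite connect0.
  case/andP => exz pz; apply: connect_trans (connect1 _) (IH _ pz).
  by apply/eeP; exists x, z.
Qed.

Lemma gam_cov : covering e ee gam.
Proof.
have [[se ie] ce] := ge.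
split.
- by move=> a; exists (val a); apply: gam_val.
- by move=> x y h; apply/eeP; exists x, y.
- move=> v; split.
    by move=> x y xin yin /gamE; apply: (lb.1 v x y xin yin).1.
  apply/setP => b; rewrite [in RHS]inE; apply/imsetP/idP => [[u uin ->]|].
    move: uin; rewrite inE => /orP [/eqP ->|evu]; first by rewrite eqxx.
    by apply/orP; right; apply/eeP; exists v, u.
  case/orP => [/eqP ->|/eeP [x [y [exy gx gy]]]]; first by exists v; rewrite ?ball_center.
  have := lb.2 x v; have lxv : lam x = lam v by apply/gamE.
  case/(_ lxv) => f [finj fim flam fedge].
  have yin : y \in ball e x by rewrite inE exy orbT.
  exists (f y); first by rewrite -fim imset_f.
  by rewrite -gy; apply/gamE; rewrite (flam y yin).
Qed.
End Dir2.

Theorem mainTheorem12 (T : finType) (e : rel T) :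
  is_graph e -> (non_ambiguous e <-> covering_minimal e).
Proof.
move=> ge; split.
- move=> na T' e' gamma ge' cov.
  have lbl := lam1_lb ge cov.
  have injl : injective (lam1 gamma).
    case: (injectiveP (lam1 gamma)) => // ni; exfalso; apply: na.
    by exists (lam1 gamma); split.
  have ginj : injective gamma by move=> x y /lam1E /injl.
  have [surj _ _] := cov.
  have hc : #|T| >= #|T'|.
    rewrite -(card_codom ginj); apply: subset_leq_card; apply/subsetP => y _.
    by have [x <-] := surj y; apply: codom_f.
  exact: (inj_card_bij ginj hc).
- move=> cm [lam [lb ni]]; apply: ni.
  have := cm _ _ _ (ee_graph ge lb) (gam_cov ge lb).
  move/bij_inj => gi x y h; apply: gi; exact/gamE.
Qed.
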